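(* Let $L\subset\mathbf{Q}$ be a nonzero subgroup, $\mathbb{A}_f$ the finite adeles of $\mathbf{Q}$ and $\widehat{\mathbf{Z}}\subset\mathbb{A}_f$ the profinite integers, and let $\xi\in\operatorname{Hom}(L,\widehat{\mathbf{Z}})$. (i) There exists a unique $a_f\in\mathbb{A}_f$ such that $\xi(x)=a_fx$ for all $x\in L$. (ii) With $a_f$ as in (i), the following are equivalent: (1) $\xi$ generates the $\widehat{\mathbf{Z}}$-module $\operatorname{Hom}(L,\widehat{\mathbf{Z}})$; (2) $L=\{q\in\mathbf{Q}\mid a_fq\in\widehat{\mathbf{Z}}\}$. *)

(* Defs.v *)
(* Zhat  = lim_n Z/nZ  (the standard definition), an element being the family
           of canonical residues z_n in [0, n) for n = 1, 2, ...
           (component index k stands for the modulus k.+1).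
   Af    = finite adeles of Q, modelled as lim_n Q/nZ.  This is the standard
           isomorphism A_f = Q + Zhat, A_f / n Zhat = Q / nZ, A_f complete for
           the n Zhat-adic topology; an element is the family of canonical
           representatives a_n in [0, n) of its images in Q/nZ. *)
From HB Require Import structures.
From mathcomp Require Import all_boot all_order all_algebra.
Set Implicit Arguments. Unset Strict Implicit. Unset Printing Implicit Defensive.
Import Order.TTheory GRing.Theory Num.Theory.
Local Open Scope ring_scope.

Definition rmod (q : rat) (n : nat) : rat :=
  q - n%:R * (Num.floor (q / n%:R))%:~R.

Record Zhat := MkZhat {
  zval : nat -> int;
  zval_compat : forall k l : nat, (k.+1 %| l.+1)%N ->
      zval k = (zval l %% (k.+1)%:Z)%Z }.

Definition zadd (a b : Zhat) : nat -> int := fun k => ((zval a k + zval b k) %% (k.+1)%:Z)%Z.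
Definition zmul (a b : Zhat) : nat -> int := fun k => ((zval a k * zval b k) %% (k.+1)%:Z)%Z.

Record Af := MkAf {
  aval : nat -> rat;
  aval_compat : forall k l : nat, (k.+1 %| l.+1)%N -> aval k = rmod (aval l) k.+1 }.

Definition zhat_to_af (z : Zhat) : nat -> rat := fun k => (zval z k)%:~R.

Definition afmulq (a : Af) (x : rat) : nat -> rat :=
  fun k => rmod (x * aval a ((k.+1 * `|denq x|%N).-1)) k.+1.

Definition in_Zhat (c : nat -> rat) : Prop := exists z : Zhat, c = zhat_to_af z.

Definition is_subgroup (L : rat -> Prop) : Prop :=
  L 0 /\ forall x y, L x -> L y -> L (x - y).

(* xi : L -> Zhat is a group homomorphism (values off L irrelevant) *)
Definition is_hom (L : rat -> Prop) (xi : rat -> Zhat) : Prop :=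
  forall x y, L x -> L y -> zval (xi (x + y)) = zadd (xi x) (xi y).

Definition generates_Hom (L : rat -> Prop) (xi : rat -> Zhat) : Prop :=
  forall eta : rat -> Zhat, is_hom L eta ->
    exists c : Zhat, forall x, L x -> zval (eta x) = zmul c (xi x).

(* Main.v *)
Require Import Defs.
From HB Require Import structures.
From mathcomp Require Import all_boot all_order all_algebra.
From mathcomp Require Import zify ring lra.
Import Order.TTheory GRing.Theory Num.Theory.
Local Open Scope ring_scope.
Set Implicit Arguments. Unset Strict Implicit.

Definition cg (q r m : rat) := exists k : int, q - r = k%:~R * m.
Definition isZ (q : rat) := exists k : int, q = k%:~R.

Lemma cg_refl q m : cg q q m.
Proof. by exists 0; rewrite subrr mul0r. Qed.
Lemma cg_eq q r m : q = r -> cg q r m.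
Proof. by move=> ->; apply: cg_refl. Qed.
Lemma cg_sym q r m : cg q r m -> cg r q m.
Proof. by case=> k H; exists (-k); rewrite intrN mulNr -H; ring. Qed.
Lemma cg_trans q r s m : cg q r m -> cg r s m -> cg q s m.
Proof.
by case=> k1 H1 [k2 H2]; exists (k1 + k2); rewrite intrD mulrDl -H1 -H2; ring.
Qed.
Lemma cgD q1 r1 q2 r2 m : cg q1 r1 m -> cg q2 r2 m -> cg (q1 + q2) (r1 + r2) m.
Proof.
by case=> k1 H1 [k2 H2]; exists (k1 + k2); rewrite intrD mulrDl -H1 -H2; ring.
Qed.
Lemma cgN q r m : cg q r m -> cg (- q) (- r) m.
Proof. by case=> k H; exists (-k); rewrite intrN mulNr -H; ring. Qed.
Lemma cgB q1 r1 q2 r2 m : cg q1 r1 m -> cg q2 r2 m -> cg (q1 - q2) (r1 - r2) m.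
Proof. by move=> H1 H2; apply: cgD => //; apply: cgN. Qed.
Lemma cgZ (c : int) q r m : cg q r m -> cg (c%:~R * q) (c%:~R * r) m.
Proof. by case=> k H; exists (c * k); rewrite intrM -mulrA -H; ring. Qed.
Lemma cg_scale c q r m : cg q r m -> cg (c * q) (c * r) (c * m).
Proof. by case=> k H; exists k; rewrite -mulrBr H; ring. Qed.
Lemma cg_div (k : int) q r m : cg q r (k%:~R * m) -> cg q r m.
Proof. by case=> j H; exists (j * k); rewrite H intrM; ring. Qed.
Lemma cg_int q r m : cg q r m -> isZ m -> cg q r 1.
Proof. by move=> H [k Hk]; apply: (@cg_div k); rewrite mulr1 -Hk. Qed.
Lemma isZ_cg q : isZ q <-> cg q 0 1.
Proof.
split=> [[k ->]|[k H]]; first by exists k; rewrite subr0 mulr1.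
by exists k; rewrite -[q]subr0 H mulr1.
Qed.
Lemma cg_isZ q r : cg q r 1 -> isZ r -> isZ q.
Proof.
move=> [k H] [j Hj]; exists (k + j); rewrite intrD -Hj -(mulr1 k%:~R) -H; ring.
Qed.
Lemma isZ_int (k : int) : isZ k%:~R. Proof. by exists k. Qed.
Lemma isZ1 : isZ 1. Proof. by exists 1. Qed.
Lemma isZ_nat (k : nat) : isZ k%:R. Proof. by exists k%:Z. Qed.
Lemma isZD q r : isZ q -> isZ r -> isZ (q + r).
Proof. by move=> [a ->] [b ->]; exists (a + b); rewrite intrD. Qed.
Lemma isZN q : isZ q -> isZ (- q).
Proof. by move=> [a ->]; exists (- a); rewrite intrN. Qed.
Lemma isZM q r : isZ q -> isZ r -> isZ (q * r).
Proof. by move=> [a ->] [b ->]; exists (a * b); rewrite intrM. Qed.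

Lemma int_lt1 (k : int) : -1 < k%:~R :> rat -> k%:~R < 1 :> rat -> k = 0.
Proof.
move=> H1 H2.
have h1 : (-1 < k)%R by rewrite -(ltr_int rat) intrN.
have h2 : (k < 1)%R by rewrite -(ltr_int rat).
lia.
Qed.

Lemma cg_range_eq r1 r2 (n : rat) : 0 <= r1 < n -> 0 <= r2 < n -> cg r1 r2 n -> r1 = r2.
Proof.
move=> /andP[a1 b1] /andP[a2 b2] [k H].
have n0 : 0 < n by lra.
have k0 : k = 0.
  apply: int_lt1.
  - rewrite -(ltr_pM2r n0) mulN1r -H; lra.
  - rewrite -(ltr_pM2r n0) mul1r -H; lra.
by move: H; rewrite k0 mul0r => /eqP; rewrite subr_eq0 => /eqP.
Qed.

Lemma rmod_cg q n : cg (rmod q n) q n%:R.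
Proof. by exists (- Num.floor (q / n%:R)); rewrite /rmod intrN; ring. Qed.

Lemma rmod_range q n : (0 < n)%N -> 0 <= rmod q n < n%:R.
Proof.
move=> n0; have n0' : 0 < n%:R :> rat by rewrite ltr0n.
have h1 := floor_le (q / n%:R); have h2 := floorD1_gt (q / n%:R).
rewrite intrD in h2.
set f := (Num.floor (q / n%:R))%:~R in h1 h2 *.
have E : q = (q / n%:R) * n%:R by rewrite divfK // gt_eqF.
rewrite /rmod -/f; apply/andP; split.
- rewrite subr_ge0; rewrite [X in _ <= X]E mulrC ler_pM2r //.
- rewrite ltrBlDr; rewrite [X in X < _]E.
  have -> : n%:R + n%:R * f = (f + 1) * n%:R by ring.
  by rewrite ltr_pM2r //; lra.
Qed.

Lemma rmod_uniq q r n : (0 < n)%N -> 0 <= r < n%:R -> cg q r n%:R -> rmod q n = r.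
Proof.
move=> n0 Hr H; apply: cg_range_eq Hr _; first exact: rmod_range.
exact: cg_trans (rmod_cg q n) H.
Qed.

Lemma rmod_eq q r n : (0 < n)%N -> cg q r n%:R -> rmod q n = rmod r n.
Proof.
move=> n0 H; apply: (rmod_uniq n0 (rmod_range r n0)).
exact: cg_trans H (cg_sym (rmod_cg r n)).
Qed.
From Stdlib Require Import FunctionalExtensionality ProofIrrelevance.
Definition av (a : Af) (n : nat) : rat := aval a n.-1.
Definition zv (z : Zhat) (n : nat) : int := zval z n.-1.
Definition dn (q : rat) : nat := `|denq q|%N.

Lemma dn_gt0 q : (0 < dn q)%N.
Proof. by rewrite /dn absz_gt0 denq_neq0. Qed.
Lemma dnE q : (dn q)%:R = (denq q)%:~R :> rat.
Proof. by rewrite /dn natr_absz gtr0_norm // denq_gt0. Qed.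
Lemma q_dn q : q * (dn q)%:R = (numq q)%:~R.
Proof. by rewrite dnE numqE. Qed.
Lemma isZ_qdn q : isZ (q * (dn q)%:R).
Proof. by rewrite q_dn; apply: isZ_int. Qed.

Lemma cg_dvd q r (m n : nat) : (m %| n)%N -> cg q r n%:R -> cg q r m%:R.
Proof.
move=> /divnK E H; apply: (@cg_div (n %/ m)%N); rewrite -[X in cg _ _ X]natrM.
by rewrite E.
Qed.

Lemma modz_cg (m : int) (n : nat) : cg m%:~R (m %% n)%Z%:~R n%:R.
Proof.
exists (m %/ n)%Z; rewrite {1}(divz_eq m n) intrD intrM; ring.
Qed.

Lemma modz_range (m : int) (n : nat) : (0 < n)%N -> (0 : rat) <= ((m %% n)%Z)%:~R < (n%:R : rat).
Proof.
move=> n0; have nz : (n%:Z != 0) by rewrite eqz_nat -lt0n.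
have := modz_ge0 m nz; have := ltz_mod m nz.
move=> h2 h1.
have h3 : (0 <= (m %% n)%Z < n%:Z)%R by lia.
by rewrite -[n%:R]/((n%:Z)%:~R : rat) ler0z ltr_int.
Qed.

Lemma modz_uniq (m r : int) (n : nat) : (0 < n)%N -> (0 : rat) <= r%:~R < (n%:R : rat) ->
  cg m%:~R r%:~R n%:R -> (m %% n)%Z = r.
Proof.
move=> n0 Hr H; apply: (@intr_inj rat).
apply: cg_range_eq (modz_range m n0) Hr _.
exact: cg_trans (cg_sym (modz_cg m n)) H.
Qed.

Lemma rmod_int (z : int) n : (0 < n)%N -> rmod z%:~R n = ((z %% n)%Z)%:~R.
Proof. by move=> n0; apply: rmod_uniq => //; [apply: modz_range | apply: modz_cg]. Qed.

Lemma av_range a n : (0 < n)%N -> 0 <= av a n < n%:R.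
Proof.
case: n => // k _; rewrite /av /= (aval_compat a (dvdnn k.+1)).
exact: rmod_range.
Qed.

Lemma av_cg a m n : (0 < m)%N -> (m %| n)%N -> (0 < n)%N -> cg (av a n) (av a m) m%:R.
Proof.
case: m => // k _; case: n => // l H _; rewrite /av /= (aval_compat a H).
exact: cg_sym (rmod_cg _ _).
Qed.

Lemma zv_range z n : (0 < n)%N -> (0 : rat) <= (zv z n)%:~R < (n%:R : rat).
Proof.
case: n => // k _; rewrite /zv /= (zval_compat z (dvdnn k.+1)).
exact: modz_range.
Qed.

Lemma zv_cg z m n : (0 < m)%N -> (m %| n)%N -> (0 < n)%N ->
  cg (zv z n)%:~R (zv z m)%:~R m%:R.
Proof.
case: m => // k _; case: n => // l H _; rewrite /zv /= (zval_compat z H).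
exact: modz_cg.
Qed.

Lemma Af_ext a b : (forall n, (0 < n)%N -> av a n = av b n) -> a = b.
Proof.
case: a => fa Ha; case: b => fb Hb /= H.
have E : fa = fb by apply: functional_extensionality => k; exact: (H k.+1).
subst fb; f_equal; apply: proof_irrelevance.
Qed.

Lemma mkAf_compat (f : nat -> rat)
  (Hf : forall k l, (k.+1 %| l.+1)%N -> cg (f l.+1) (f k.+1) k.+1%:R) :
  forall k l : nat, (k.+1 %| l.+1)%N ->
   (fun k => rmod (f k.+1) k.+1) k = rmod ((fun k => rmod (f k.+1) k.+1) l) k.+1.
Proof.
move=> k l H /=; apply: rmod_eq => //.
apply: cg_trans (cg_sym (Hf _ _ H)) _.
apply: cg_dvd H _; exact: cg_sym (rmod_cg _ _).
Qed.

Definition mkAf f Hf : Af := MkAf (@mkAf_compat f Hf).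

Lemma av_mkAf f Hf n : (0 < n)%N -> cg (av (@mkAf f Hf) n) (f n) n%:R.
Proof. by case: n => // k _; exact: rmod_cg. Qed.

Lemma mkZ_compat (g : nat -> int)
  (Hg : forall k l, (k.+1 %| l.+1)%N -> cg (g l.+1)%:~R (g k.+1)%:~R k.+1%:R) :
  forall k l : nat, (k.+1 %| l.+1)%N ->
   (fun k => (g k.+1 %% k.+1)%Z) k = (((fun k => (g k.+1 %% k.+1)%Z) l) %% k.+1)%Z.
Proof.
move=> k l H /=; apply: esym; apply: modz_uniq => //; first exact: modz_range.
apply: cg_trans _ (modz_cg _ _).
apply: cg_trans (Hg _ _ H); apply: cg_dvd H _; exact: cg_sym (modz_cg _ _).
Qed.

Definition mkZ g Hg : Zhat := MkZhat (@mkZ_compat g Hg).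

Lemma zv_mkZ g Hg n : (0 < n)%N -> cg (zv (@mkZ g Hg) n)%:~R (g n)%:~R n%:R.
Proof. by case: n => // k _; exact: cg_sym (modz_cg _ _). Qed.

Definition A (a : Af) (q : rat) : rat := q * av a (dn q).

Lemma cg_mulZ q r c m : cg q r (c * m) -> isZ c -> cg q r m.
Proof. by move=> H [k Hk]; apply: (@cg_div k); rewrite -Hk. Qed.

Lemma A_cg a q (N : nat) : (0 < N)%N -> isZ (q * N%:R) -> cg (q * av a N) (A a q) 1.
Proof.
move=> N0 HZ; set M := (N * dn q)%N.
have M0 : (0 < M)%N by rewrite muln_gt0 N0 dn_gt0.
have h1 := av_cg a N0 (dvdn_mulr (dn q) (dvdnn N)) M0.
have h2 := av_cg a (dn_gt0 q) (dvdn_mull N (dvdnn (dn q))) M0.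
have h1' := cg_scale q h1; have h2' := cg_scale q h2.
apply: cg_trans (cg_sym (cg_int h1' HZ)) _.
exact: cg_int h2' (isZ_qdn q).
Qed.

Lemma isZ_mulnat q (N M : nat) : isZ (q * N%:R) -> isZ (q * (N * M)%:R).
Proof. by move=> H; rewrite natrM mulrA; apply: isZM H (isZ_nat _). Qed.
Lemma isZ_mulnat' q (N M : nat) : isZ (q * N%:R) -> isZ (q * (M * N)%:R).
Proof. by rewrite mulnC; apply: isZ_mulnat. Qed.

Lemma A_add a q r : cg (A a (q + r)) (A a q + A a r) 1.
Proof.
set N := (dn q * dn r)%N.
have N0 : (0 < N)%N by rewrite muln_gt0 !dn_gt0.
have hq : isZ (q * N%:R) by apply: isZ_mulnat (isZ_qdn q).
have hr : isZ (r * N%:R) by apply: isZ_mulnat' (isZ_qdn r).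
have hqr : isZ ((q + r) * N%:R) by rewrite mulrDl; apply: isZD.
apply: cg_trans (cg_sym (A_cg a N0 hqr)) _.
rewrite mulrDl; apply: cgD; exact: A_cg.
Qed.

Lemma A_mulz a q (k : int) : cg (A a (k%:~R * q)) (k%:~R * A a q) 1.
Proof.
have h : isZ (k%:~R * q * (dn q)%:R) by rewrite -mulrA; apply: isZM (isZ_int _) (isZ_qdn q).
apply: cg_trans (cg_sym (A_cg a (dn_gt0 q) h)) _.
by rewrite /A -mulrA; apply: cg_refl.
Qed.

Lemma A_opp a q : cg (A a (- q)) (- A a q) 1.
Proof.
have := A_mulz a q (-1); rewrite intrN mulN1r mulN1r; exact.
Qed.

Lemma A_sub a q r : cg (A a (q - r)) (A a q - A a r) 1.
Proof. exact: cg_trans (A_add a q (- r)) (cgD (cg_refl _ _) (A_opp a r)). Qed.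

Lemma A0 a : A a 0 = 0.
Proof. by rewrite /A mul0r. Qed.

Lemma afmulqE a x (n : nat) : (0 < n)%N -> afmulq a x n.-1 = rmod (x * av a (n * dn x)) n.
Proof. by case: n. Qed.

Lemma afmulq_cg0 a x (n : nat) : (0 < n)%N ->
  cg (x * av a (n * dn x)) (n%:R * A a (x / n%:R)) n%:R.
Proof.
move=> n0; have nz : n%:R != 0 :> rat by rewrite pnatr_eq0 -lt0n.
have h : isZ (x / n%:R * (n * dn x)%:R).
  by rewrite natrM mulrA divfK //; apply: isZ_qdn.
have nd0 : (0 < n * dn x)%N by rewrite muln_gt0 n0 dn_gt0.
have := cg_scale n%:R (A_cg a nd0 h); rewrite mulr1.
by rewrite mulrA mulrCA divff // mulr1.
Qed.

Lemma afmulq_cg a x (n : nat) : (0 < n)%N ->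
  cg (afmulq a x n.-1) (n%:R * A a (x / n%:R)) n%:R.
Proof.
move=> n0; rewrite afmulqE //; apply: cg_trans (rmod_cg _ _) _; exact: afmulq_cg0.
Qed.

Lemma AfMulq_compat a r : forall k l, (k.+1 %| l.+1)%N ->
  cg ((fun n => r * av a (n * dn r)) l.+1) ((fun n => r * av a (n * dn r)) k.+1) k.+1%:R.
Proof.
move=> k l H /=.
have p1 : (0 < k.+1 * dn r)%N by rewrite muln_gt0 dn_gt0.
have p2 : (0 < l.+1 * dn r)%N by rewrite muln_gt0 dn_gt0.
have h := av_cg a p1 (dvdn_mul H (dvdnn (dn r))) p2.
have := cg_scale r h.
rewrite natrM mulrCA q_dn [X in cg _ _ X]mulrC => h2.
exact: cg_mulZ h2 (isZ_int _).
Qed.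

Definition AfMulq a r : Af := mkAf (@AfMulq_compat a r).

Lemma av_AfMulq a r n : (0 < n)%N -> av (AfMulq a r) n = afmulq a r n.-1.
Proof. by case: n. Qed.

Lemma A_AfMulq a r y : cg (A (AfMulq a r) y) (A a (r * y)) 1.
Proof.
have h1 := av_mkAf (@AfMulq_compat a r) (dn_gt0 y).
have h2 := cg_int (cg_scale y h1) (isZ_qdn y).
apply: cg_trans h2 _; rewrite /= mulrCA mulrA.
apply: A_cg; first by rewrite muln_gt0 !dn_gt0.
have -> : r * y * (dn y * dn r)%:R = (y * (dn y)%:R) * (r * (dn r)%:R) by rewrite natrM; ring.
by rewrite !q_dn; apply: isZM; apply: isZ_int.
Qed.

Lemma L0 L : is_subgroup L -> L 0.
Proof. by case. Qed.
Lemma L_sub L x y : is_subgroup L -> L x -> L y -> L (x - y).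
Proof. by case=> _ H; apply: H. Qed.
Lemma L_opp L x : is_subgroup L -> L x -> L (- x).
Proof. by move=> HL Lx; rewrite -sub0r; apply: L_sub => //; apply: L0. Qed.
Lemma L_add L x y : is_subgroup L -> L x -> L y -> L (x + y).
Proof. by move=> HL Lx Ly; rewrite -(opprK y); apply: L_sub => //; apply: L_opp. Qed.
Lemma L_muln L x (k : nat) : is_subgroup L -> L x -> L (k%:R * x).
Proof.
move=> HL Lx; elim: k => [|k IH]; first by rewrite mul0r; apply: L0.
have -> : k.+1%:R * x = k%:R * x + x by rewrite -addn1 natrD; ring.
exact: L_add.
Qed.
Lemma L_mulz L x (k : int) : is_subgroup L -> L x -> L (k%:~R * x).
Proof.
move=> HL Lx; case: k => j; first exact: L_muln.
rewrite NegzE intrN mulNr; apply: L_opp => //; exact: L_muln.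
Qed.

Lemma hom_cg L xi x y n : is_hom L xi -> L x -> L y -> (0 < n)%N ->
  cg (zv (xi (x + y)) n)%:~R ((zv (xi x) n)%:~R + (zv (xi y) n)%:~R) n%:R.
Proof.
move=> H Lx Ly; case: n => // k _; rewrite /zv /= (H x y Lx Ly) /zadd -intrD.
exact: cg_sym (modz_cg _ _).
Qed.

Lemma hom0 L xi n : is_subgroup L -> is_hom L xi -> (0 < n)%N ->
  cg (zv (xi 0) n)%:~R 0 n%:R.
Proof.
move=> HL H n0; have := hom_cg H (L0 HL) (L0 HL) n0; rewrite addr0 => h.
have := cgB h (cg_refl (zv (xi 0) n)%:~R n%:R); rewrite subrr addrK => h2.
exact: cg_sym h2.
Qed.

Lemma homN L xi x n : is_subgroup L -> is_hom L xi -> L x -> (0 < n)%N ->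
  cg (zv (xi (- x)) n)%:~R (- (zv (xi x) n)%:~R) n%:R.
Proof.
move=> HL H Lx n0; have := hom_cg H (L_opp HL Lx) Lx n0; rewrite addNr => h.
have h2 := cg_trans (cg_sym h) (hom0 HL H n0).
have := cgB h2 (cg_refl (zv (xi x) n)%:~R n%:R); rewrite addrK sub0r; exact.
Qed.

Lemma hom_muln L xi x n (k : nat) : is_subgroup L -> is_hom L xi -> L x -> (0 < n)%N ->
  cg (zv (xi (k%:R * x)) n)%:~R (k%:R * (zv (xi x) n)%:~R) n%:R.
Proof.
move=> HL H Lx n0; elim: k => [|k IH]; first by rewrite !mul0r; exact: (hom0 HL H n0).
have e : k.+1%:R = k%:R + 1 :> rat by rewrite -addn1 natrD.
have -> : k.+1%:R * x = k%:R * x + x by rewrite e; ring.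
apply: cg_trans (hom_cg H (L_muln k HL Lx) Lx n0) _.
have -> : k.+1%:R * (zv (xi x) n)%:~R = k%:R * (zv (xi x) n)%:~R + (zv (xi x) n)%:~R :> rat.
  by rewrite e; ring.
exact: cgD IH (cg_refl _ _).
Qed.

Lemma hom_mulz L xi x n (k : int) : is_subgroup L -> is_hom L xi -> L x -> (0 < n)%N ->
  cg (zv (xi (k%:~R * x)) n)%:~R (k%:~R * (zv (xi x) n)%:~R) n%:R.
Proof.
move=> HL H Lx n0; case: k => j; first exact: (hom_muln j HL H Lx n0).
rewrite NegzE intrN !mulNr.
apply: cg_trans (homN HL H (L_muln j.+1 HL Lx) n0) _.
exact: cgN (hom_muln j.+1 HL H Lx n0).
Qed.

Lemma pos_elem L : is_subgroup L -> (exists x, L x /\ x != 0) -> exists x, L x /\ 0 < x.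
Proof.
move=> HL [x [Lx nx]]; case: (ltrgtP x 0) => hx.
- by exists (- x); split; [apply: L_opp | rewrite oppr_gt0].
- by exists x.
- by move: nx; rewrite hx eqxx.
Qed.

Lemma afmulqE' a x k : afmulq a x k = rmod (x * av a (k.+1 * dn x)) k.+1.
Proof. by []. Qed.

Lemma hom_adele L xi : is_subgroup L -> (exists x, L x /\ x != 0) -> is_hom L xi ->
  exists a, forall x, L x -> afmulq a x = zhat_to_af (xi x).
Proof.
move=> HL Hne H; have [x0 [Lx0 x0p]] := pos_elem HL Hne.
set u0 := `|numq x0|%N; set v0 := dn x0.
have u0E : u0%:R = (numq x0)%:~R :> rat.
  by rewrite /u0 natr_absz gtr0_norm // numq_gt0.
have u0p : (0 < u0)%N by rewrite /u0 absz_gt0 numq_eq0 gt_eqF.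
have u0nz : u0%:R != 0 :> rat by rewrite pnatr_eq0 -lt0n.
have v0nz : v0%:R != 0 :> rat by rewrite pnatr_eq0 -lt0n dn_gt0.
have x0E : x0 * v0%:R = u0%:R by rewrite u0E q_dn.
pose al (n : nat) : rat := v0%:R / u0%:R * (zv (xi x0) (n * u0))%:~R.
have Hal : forall k l, (k.+1 %| l.+1)%N -> cg (al l.+1) (al k.+1) k.+1%:R.
  move=> k l Hkl; rewrite /al.
  have p1 : (0 < k.+1 * u0)%N by rewrite muln_gt0.
  have p2 : (0 < l.+1 * u0)%N by rewrite muln_gt0.
  have := cg_scale (v0%:R / u0%:R) (zv_cg (xi x0) p1 (dvdn_mul Hkl (dvdnn u0)) p2).
  have -> : v0%:R / u0%:R * (k.+1 * u0)%:R = v0%:R * k.+1%:R :> rat.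
    by rewrite natrM; field.
  by move=> h; apply: cg_mulZ h (isZ_nat _).
exists (mkAf Hal) => x Lx; apply: functional_extensionality => k.
rewrite afmulqE' /zhat_to_af; set n := k.+1.
have n0 : (0 < n)%N by [].
change (zval (xi x) k) with (zv (xi x) n).
apply: rmod_uniq => //; first exact: zv_range.
set v := dn x; set u := numq x; set N := (n * v * u0)%N.
have N0 : (0 < N)%N by rewrite /N !muln_gt0 n0 dn_gt0.
have nv0 : (0 < n * v)%N by rewrite muln_gt0 n0 dn_gt0.
have vnz : v%:R != 0 :> rat by rewrite pnatr_eq0 -lt0n dn_gt0.
have xE : x * v%:R = u%:~R by rewrite q_dn.
have s1 : cg (x * av (mkAf Hal) (n * v)) (x * al (n * v)%N) n%:R.
  have := cg_scale x (av_mkAf Hal nv0).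
  have -> : x * (n * v)%:R = u%:~R * n%:R by rewrite natrM mulrCA xE mulrC.
  by move=> h; apply: cg_mulZ h (isZ_int _).
apply: cg_trans s1 _; rewrite /al -/N.
pose k1 : int := (v%:Z * u0%:Z); pose k2 : int := u * v0%:Z.
have E : k1%:~R * x = k2%:~R * x0.
  rewrite /k1 /k2 !intrM -[(Posz v)%:~R]/(v%:R : rat) -[(Posz u0)%:~R]/(u0%:R : rat).
  rewrite -[(Posz v0)%:~R]/(v0%:R : rat) -x0E -xE; ring.
have h3 := hom_mulz k1 HL H Lx N0; have h4 := hom_mulz k2 HL H Lx0 N0.
rewrite E in h3.
have h5 := cg_trans (cg_sym h3) h4.
have k1nz : k1%:~R != 0 :> rat.
  by rewrite /k1 intrM mulf_neq0 //.
have := cg_scale (k1%:~R)^-1 h5.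
have -> : (k1%:~R)^-1 * N%:R = n%:R :> rat.
  rewrite /N /k1 !natrM intrM -[(Posz v)%:~R]/(v%:R : rat) -[(Posz u0)%:~R]/(u0%:R : rat).
  by field; rewrite u0nz vnz.
have -> : (k1%:~R)^-1 * (k1%:~R * (zv (xi x) N)%:~R) = (zv (xi x) N)%:~R :> rat.
  by rewrite mulKf.
have -> : (k1%:~R)^-1 * (k2%:~R * (zv (xi x0) N)%:~R) =
          x * (v0%:R / u0%:R * (zv (xi x0) N)%:~R) :> rat.
  rewrite /k1 /k2 !intrM -[(Posz v)%:~R]/(v%:R : rat) -[(Posz u0)%:~R]/(u0%:R : rat).
  rewrite -[(Posz v0)%:~R]/(v0%:R : rat) -xE; field.
  by rewrite u0nz vnz.
move=> h6; apply: cg_trans (cg_sym h6) _.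
apply: zv_cg => //; rewrite /N -mulnA; exact: dvdn_mulr.
Qed.

Lemma afmulq_inj a b x : 0 < x -> afmulq a x = afmulq b x -> a = b.
Proof.
move=> xp E; apply: Af_ext => n n0.
set u := `|numq x|%N; set v := dn x.
have uE : u%:R = (numq x)%:~R :> rat by rewrite /u natr_absz gtr0_norm // numq_gt0.
have u0p : (0 < u)%N by rewrite /u absz_gt0 numq_eq0 gt_eqF.
have unz : u%:R != 0 :> rat by rewrite pnatr_eq0 -lt0n.
have vnz : v%:R != 0 :> rat by rewrite pnatr_eq0 -lt0n dn_gt0.
have xE : x * v%:R = u%:R by rewrite uE q_dn.
set M := (n * u)%N.
have M0 : (0 < M)%N by rewrite muln_gt0 n0.
have h : cg (x * av a (M * v)) (x * av b (M * v)) M%:R.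
  have e := congr1 (fun f => f M.-1) E; rewrite /= !afmulqE // in e.
  apply: cg_trans (cg_sym (rmod_cg _ M)) _; rewrite e; exact: rmod_cg.
have := cg_scale x^-1 h; rewrite !mulKf ?gt_eqF //.
have -> : x^-1 * M%:R = v%:R * n%:R.
  have -> : x = u%:R / v%:R by rewrite -xE mulfK.
  rewrite /M natrM; field.
  by rewrite unz vnz.
move=> h2; have h3 := cg_mulZ h2 (isZ_nat v).
set P := (M * v)%N.
have P0 : (0 < P)%N by rewrite muln_gt0 M0 dn_gt0.
have d : (n %| P)%N by rewrite /P /M -mulnA dvdn_mulr.
apply: cg_range_eq (av_range a n0) (av_range b n0) _.
apply: cg_trans (cg_sym (av_cg a n0 d P0)) _; exact: cg_trans h3 (av_cg b n0 d P0).
Qed.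

Lemma A_nat_div a q n : (0 < n)%N -> cg (n%:R * A a (q / n%:R)) (A a q) 1.
Proof.
move=> n0; have nz : n%:R != 0 :> rat by rewrite pnatr_eq0 -lt0n.
have := A_mulz a (q / n%:R) n%:Z; rewrite -[(Posz n)%:~R]/(n%:R : rat).
by rewrite mulrC divfK // => h; exact: cg_sym h.
Qed.

Lemma afmulq_isZ a q k : isZ (A a q) -> isZ (afmulq a q k).
Proof.
move=> HA; have := afmulq_cg a q (ltn0Sn k) => /= h.
have h2 := cg_trans (cg_int h (isZ_nat _)) (A_nat_div a q (ltn0Sn k)).
exact: cg_isZ h2 HA.
Qed.

Lemma in_Zhat_iff a q : in_Zhat (afmulq a q) <-> isZ (A a q).
Proof.
split.
- case=> z Hz; have e := congr1 (fun f => f 0%N) Hz.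
  have := afmulq_cg a q (ltn0Sn 0); rewrite /= e mul1r divr1 => h.
  exact: cg_isZ (cg_sym h) (isZ_int _).
- move=> HA; pose g (n : nat) : int := Num.floor (afmulq a q n.-1).
  have gE : forall n, (g n)%:~R = afmulq a q n.-1.
    by move=> n; rewrite /g; case: (afmulq_isZ n.-1 HA) => k ->; rewrite intrKfloor.
  have Hg : forall k l, (k.+1 %| l.+1)%N -> cg (g l.+1)%:~R (g k.+1)%:~R k.+1%:R.
    move=> k l H; rewrite !gE.
    have := av_cg (AfMulq a q) (ltn0Sn k) H (ltn0Sn l).
    by rewrite !av_AfMulq.
  exists (mkZ Hg); apply: functional_extensionality => k.
  rewrite /zhat_to_af /= -rmod_int // gE /= afmulqE'.
  apply: esym; apply: rmod_eq => //; exact: rmod_cg.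
Qed.

Lemma xi_cg a x z n : afmulq a x = zhat_to_af z -> (0 < n)%N ->
  cg (zv z n)%:~R (n%:R * A a (x / n%:R)) n%:R.
Proof.
move=> Hz n0; have e := congr1 (fun f => f n.-1) Hz; rewrite /= /zhat_to_af in e.
rewrite /zv -e; exact: afmulq_cg.
Qed.

Lemma hom_A_isZ a x z : afmulq a x = zhat_to_af z -> isZ (A a x).
Proof. by move=> H; apply/in_Zhat_iff; exists z. Qed.

From Stdlib Require Import Classical IndefiniteDescription.

Lemma ex_min (P : nat -> Prop) : (exists n, P n) -> exists n, P n /\ forall m, (m < n)%N -> ~ P m.
Proof.
move=> [n Pn]; elim/ltn_ind: n Pn => n IH Pn.
case: (classic (exists m, (m < n)%N /\ P m)) => [[m [Hm Pm]]|H].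
  exact: IH m Hm Pm.
by exists n; split => // m Hm Pm; apply: H; exists m; split.
Qed.

Definition isS (L : rat -> Prop) (a b : Af) (M : nat) (s : int) :=
  forall y, L (M%:R * y) -> cg (A b y) (s%:~R * A a y) 1.

Lemma cg_intE (x y : int) (n : nat) : cg x%:~R y%:~R n%:R -> exists w : int, x - y = w * n%:Z.
Proof.
case=> w H; exists w; apply: (@intr_inj rat); rewrite intrB H intrM //.
Qed.

Lemma lift_S L a b (N M : nat) s :
  is_subgroup L -> (forall q, L q <-> isZ (A a q)) -> (forall y, L y -> isZ (A b y)) ->
  (0 < N)%N -> (N %| M)%N -> (0 < M)%N -> isS L a b N s ->
  exists s', isS L a b M s' /\ cg s'%:~R s%:~R N%:R.
Proof.
move=> HL K Hb N0 NM M0 HS.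
have Mnz : M%:R != 0 :> rat by rewrite pnatr_eq0 -lt0n.
pose T (t : int) := exists y, L (M%:R * y) /\ cg (A a y) (t%:~R / M%:R) 1.
have Tcomb : forall t1 t2 (j : int), T t1 -> T t2 -> T (t1 - j * t2).
  move=> t1 t2 j [y1 [Ly1 h1]] [y2 [Ly2 h2]]; exists (y1 - j%:~R * y2); split.
    rewrite mulrBr mulrCA; apply: L_sub => //; exact: L_mulz.
  apply: cg_trans (A_sub a _ _) _.
  have := cgB h1 (cg_trans (A_mulz a y2 j) (cgZ j h2)).
  by rewrite intrB intrM mulrBl mulrA.
have TM : T M.
  exists 0; split; first by rewrite mulr0; exact: L0.
  by rewrite A0 -[(Posz M)%:~R]/(M%:R : rat) divff //; exists (-1); rewrite sub0r mulr1.
have [g [[g0 Tg] gmin]] := ex_min (ex_intro (fun g => (0 < g)%N /\ T g) M (conj M0 TM)).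
have Tdiv : forall t, T t -> exists i : int, t = i * g%:Z.
  move=> t Tt; exists (t %/ g)%Z.
  have Tr : T (t %% g)%Z.
    have -> : (t %% g)%Z = t - (t %/ g)%Z * g by rewrite {2}(divz_eq t g); ring.
    exact: Tcomb.
  have gnz : (g%:Z != 0) by rewrite eqz_nat -lt0n.
  have r0 := modz_ge0 t gnz; have r1 := ltz_mod t gnz.
  case: (ltrgtP (t %% g)%Z 0) => hr; first by lia.
  - have hr' : (0 < `|(t %% g)%Z|)%N by lia.
    have hr'' : (`|(t %% g)%Z| < g)%N by lia.
    exfalso; apply: (gmin _ hr''); split => //.
    by have -> : (Posz `|(t %% g)%Z|) = (t %% g)%Z by lia.
  - by rewrite {1}(divz_eq t g) hr addr0.
have gM : (g %| M)%N.
  have [i Hi] := Tdiv _ TM.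
  apply/dvdnP; exists `|i|%N; lia.
set D := (M %/ g)%N.
have MDg : M = (D * g)%N by rewrite /D divnK.
have D0 : (0 < D)%N by move: M0; rewrite MDg muln_gt0 => /andP[].
have Dnz : D%:R != 0 :> rat by rewrite pnatr_eq0 -lt0n.
have gnz' : g%:R != 0 :> rat by rewrite pnatr_eq0 -lt0n.
have gM' : (g%:Z)%:~R / M%:R = (D%:R)^-1 :> rat.
  rewrite -[(Posz g)%:~R]/(g%:R : rat) MDg natrM; field.
  by rewrite Dnz gnz'.
have [y1 [Ly1 hy1]] := Tg; rewrite gM' in hy1.
have every : forall y, L (M%:R * y) -> exists i : int, cg (A a y) (i%:~R * A a y1) 1.
  move=> y Ly.
  have hZ : isZ (M%:R * A a y).
    apply: cg_isZ _ ((K _).1 Ly); apply: cg_sym; exact: (A_mulz a y M%:Z).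
  have [t Ht] := hZ.
  have Tt : T t.
    exists y; split => //; apply: cg_eq; rewrite -Ht; field; exact: Mnz.
  have [i Hi] := Tdiv _ Tt; exists i.
  have -> : A a y = t%:~R / M%:R by rewrite -Ht; field.
  rewrite Hi intrM -mulrA gM'.
  by apply: cg_sym; apply: cgZ.
set beta := A b y1.
have hDb : isZ (D%:R * beta).
  have h1 : isZ (A a (D%:R * y1)).
    apply: cg_isZ (A_mulz a y1 D%:Z) _.
    apply: cg_isZ (cgZ D%:Z hy1) _.
    by rewrite -[(Posz D)%:~R]/(D%:R : rat) divff //; exact: isZ1.
  have h2 := Hb _ ((K _).2 h1).
  exact: cg_isZ (cg_sym (A_mulz b y1 D%:Z)) h2.
have [j Hj] := hDb.
have betaE : beta = j%:~R / D%:R by rewrite -Hj; field.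
have Hsuff : forall s' : int, cg s'%:~R j%:~R D%:R -> isS L a b M s'.
  move=> s' Hs' y Ly; have [i Hi] := every y Ly.
  have L1 : L (y - i%:~R * y1).
    apply/K; apply: cg_isZ (A_sub a _ _) _.
    apply: cg_isZ (cgB (cg_refl _ _) (A_mulz a y1 i)) _.
    by apply/isZ_cg; move: (cgB Hi (cg_refl (i%:~R * A a y1) 1)); rewrite subrr.
  have h1 := Hb _ L1.
  have h2 : cg (A b y) (i%:~R * beta) 1.
    have h3 := cg_trans (cg_sym (A_sub b y (i%:~R * y1))) ((isZ_cg _).1 h1).
    have h4 := cg_trans (cgB (cg_refl (A b y) 1) (cg_sym (A_mulz b y1 i))) h3.
    by move: (cgD h4 (cg_refl (i%:~R * beta) 1)); rewrite subrK add0r.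
  apply: cg_trans h2 _.
  apply: cg_sym; apply: cg_trans (cgZ s' Hi) _.
  rewrite mulrA -intrM; apply: cg_trans (cgZ (s' * i) hy1) _.
  rewrite betaE.
  have := cg_scale (i%:~R / D%:R) Hs'.
  have -> : i%:~R / D%:R * D%:R = i%:~R :> rat by rewrite divfK.
  move=> h5; have h6 := cg_int h5 (isZ_int i).
  apply: cg_trans (cg_eq _ _) (cg_trans h6 (cg_eq _ _)).
    by rewrite intrM; field; exact: Dnz.
  by rewrite mulrAC -mulrA.
set e := gcdn D N.
have e0 : (0 < e)%N by rewrite gcdn_gt0 D0.
have enz : e%:R != 0 :> rat by rewrite pnatr_eq0 -lt0n.
have [D' DE] : exists D', D = (D' * e)%N by exists (D %/ e)%N; rewrite divnK // dvdn_gcdl.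
have [N' NE] : exists N', N = (N' * e)%N by exists (N %/ e)%N; rewrite divnK // dvdn_gcdr.
have D'nz : D'%:R != 0 :> rat.
  by rewrite pnatr_eq0 -lt0n; move: D0; rewrite DE muln_gt0 => /andP[].
set yy := D'%:R * y1.
have hy : cg (A a yy) (e%:R)^-1 1.
  apply: cg_trans (A_mulz a y1 D'%:Z) _.
  apply: cg_trans (cgZ D'%:Z hy1) (cg_eq _ _).
  rewrite -[(Posz D')%:~R]/(D'%:R : rat) DE natrM; field.
  by rewrite enz D'nz.
have LNy : L (N%:R * yy).
  apply/K; apply: cg_isZ (A_mulz a yy N%:Z) _.
  apply: cg_isZ (cgZ N%:Z hy) _.
  rewrite -[(Posz N)%:~R]/(N%:R : rat) NE natrM mulfK //; exact: isZ_nat.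
have hS := HS yy LNy.
have hjs : cg (j%:~R / e%:R) (s%:~R / e%:R) 1.
  apply: cg_trans _ (cg_trans hS (cgZ s hy)).
  apply: cg_sym; apply: cg_trans (A_mulz b y1 D'%:Z) (cg_eq _ _).
  rewrite -/beta betaE -[(Posz D')%:~R]/(D'%:R : rat) DE natrM; field.
  by rewrite enz D'nz.
have hjs' : cg j%:~R s%:~R e%:R.
  move: (cg_scale e%:R hjs).
  by rewrite mulr1 [e%:R * (j%:~R / _)]mulrC [e%:R * (s%:~R / _)]mulrC !divfK.
have [w Hw] := cg_intE hjs'.
have [u [v Huv]] := Bezoutz D%:Z N%:Z.
exists (s + w * v * N%:Z); split.
  apply: Hsuff; exists (- (w * u)).
  rewrite -[D%:R]/((D%:Z)%:~R : rat) -intrM -intrB; congr (_%:~R).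
  have He : gcdz D%:Z N%:Z = e%:Z by [].
  rewrite He in Huv.
  have Hw' : j = s + w * e%:Z by rewrite -Hw; ring.
  rewrite Hw' -Huv; ring.
exists (w * v); rewrite -[N%:R]/((N%:Z)%:~R : rat) -intrM -intrB; congr (_%:~R); ring.
Qed.

Fixpoint chain (f : nat -> int -> int) (j : nat) : int :=
  match j with 0 => 0 | j'.+1 => f j' (chain f j') end.

Lemma fact_dvd m j : (m <= j)%N -> (m`! %| j`!)%N.
Proof.
elim: j => [|j IH]; first by rewrite leqn0 => /eqP ->.
rewrite leq_eqVlt => /orP[/eqP -> //|]; rewrite ltnS => /IH h.
by rewrite factS dvdn_mull.
Qed.

Lemma cgMr (c : int) q r m : cg q r m -> cg (q * c%:~R) (r * c%:~R) m.
Proof. by move=> h; rewrite ![_ * c%:~R]mulrC; exact: cgZ. Qed.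

Lemma gen_of_ker L xi a : is_subgroup L -> (exists x, L x /\ x != 0) -> is_hom L xi ->
  (forall x, L x -> afmulq a x = zhat_to_af (xi x)) ->
  (forall q, L q <-> isZ (A a q)) -> generates_Hom L xi.
Proof.
move=> HL Hne Hxi Ha K eta Heta.
have [b Hb] := hom_adele HL Hne Heta.
have HbZ : forall y, L y -> isZ (A b y) by move=> y Ly; exact: hom_A_isZ (Hb y Ly).
have Hf : forall j s, exists s' : int, isS L a b (j`!) s ->
     isS L a b (j.+1`!) s' /\ cg s'%:~R s%:~R (j`!)%:R.
  move=> j s; case: (classic (isS L a b (j`!) s)) => H.
  - have dv : (j`! %| j.+1`!)%N by rewrite factS dvdn_mull.
    have [s' [H1 H2]] := lift_S HL K HbZ (fact_gt0 j) dv (fact_gt0 _) H.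
    by exists s'.
  - by exists 0.
have [f Hf'] : exists f : nat -> int -> int, forall j s, isS L a b (j`!) s ->
     isS L a b (j.+1`!) (f j s) /\ cg (f j s)%:~R s%:~R (j`!)%:R.
  exists (fun j s => proj1_sig (constructive_indefinite_description _ (Hf j s))).
  move=> j s; exact: (proj2_sig (constructive_indefinite_description _ (Hf j s))).
have chainS : forall j, isS L a b (j`!) (chain f j).
  elim => [|j IH] /=.
    by move=> y Ly; rewrite mul0r; apply/isZ_cg; apply: HbZ; rewrite mul1r in Ly.
  exact: (Hf' j _ IH).1.
have chain_cg : forall m j, (m <= j)%N -> cg (chain f j)%:~R (chain f m)%:~R (m`!)%:R.
  move=> m; elim => [|j IH] hm.
    by move: hm; rewrite leqn0 => /eqP ->; exact: cg_refl.
  move: hm; rewrite leq_eqVlt => /orP[/eqP ->|]; first exact: cg_refl.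
  rewrite ltnS => hm; apply: cg_trans _ (IH hm).
  exact: cg_dvd (fact_dvd hm) (Hf' j _ (chainS j)).2.
have Hc : forall k l, (k.+1 %| l.+1)%N -> cg (chain f l.+1)%:~R (chain f k.+1)%:~R k.+1%:R.
  move=> k l H; apply: cg_dvd (chain_cg _ _ (dvdn_leq _ H)) => //.
  by apply: dvdn_fact; rewrite ltn0Sn leqnn.
exists (mkZ Hc) => x Lx; apply: functional_extensionality => k.
rewrite /zmul /=; set n := k.+1.
have n0 : (0 < n)%N by [].
have nnz : n%:R != 0 :> rat by rewrite pnatr_eq0.
change (zval (eta x) k) with (zv (eta x) n); change (zval (xi x) k) with (zv (xi x) n).
apply: esym; apply: modz_uniq => //; first exact: zv_range.
rewrite intrM.
have Ls : L ((n`!)%:R * (x / n%:R)).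
  have -> : (n`!)%:R * (x / n%:R) = (k`!)%:R * x by rewrite factS natrM -/n; field.
  exact: L_muln.
have h := chainS n _ Ls.
have h' := cg_scale n%:R h; rewrite mulr1 in h'.
have hx := xi_cg (Ha x Lx) n0.
have he := xi_cg (Hb x Lx) n0.
apply: cg_trans (cgMr (zv (xi x) n) (cg_sym (modz_cg (chain f n) n))) _.
apply: cg_trans (cgZ (chain f n) hx) _.
apply: cg_trans (cg_eq _ _) (cg_trans (cg_sym h') (cg_sym he)).
ring.
Qed.

Lemma cg_modn (x y m : nat) : x = y %[mod m] -> cg x%:R y%:R m%:R.
Proof.
move=> H; exists (Posz (x %/ m) - Posz (y %/ m)).
rewrite {1}(divn_eq x m) {1}(divn_eq y m) H !natrD !natrM intrB /=; ring.
Qed.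

Definition epsg (p : nat) (n : nat) : int := Posz (chinese (n`_p) (n`_p^') 1 0).

Lemma eps_compat p : forall k l, (k.+1 %| l.+1)%N ->
  cg (epsg p l.+1)%:~R (epsg p k.+1)%:~R k.+1%:R.
Proof.
move=> k l H; apply: cg_modn.
set m := k.+1; set n := l.+1.
have m0 : (0 < m)%N by []; have n0 : (0 < n)%N by [].
set X := chinese _ _ 1 0; set Y := chinese _ _ 1 0.
rewrite -[in X in _ = _ %[mod X]](partnC p m0).
apply/eqP; rewrite chinese_remainder ?coprime_partC //; apply/andP; split; apply/eqP.
- rewrite -(modn_dvdm X (partn_dvd p n0 H)) /X (chinese_modl (coprime_partC p n n)).
  rewrite modn_dvdm ?partn_dvd // /Y (chinese_modl (coprime_partC p m m)) //.
- rewrite -(modn_dvdm X (partn_dvd p^' n0 H)) /X (chinese_modr (coprime_partC p n n)).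
  rewrite modn_dvdm ?partn_dvd // /Y (chinese_modr (coprime_partC p m m)) //.
Qed.

Definition eps p : Zhat := mkZ (@eps_compat p).

Lemma eps_p' (p s : nat) : prime p -> (0 < s)%N -> ~~ (p %| s)%N ->
  cg (zv (eps p) s)%:~R 0 s%:R.
Proof.
move=> pr s0 nd; apply: cg_trans (zv_mkZ _ s0) _.
have hs : (s`_p^')%N = s by apply: part_pnat_id; rewrite p'natE.
have := chinese_modr (coprime_partC p s s) 1 0.
rewrite [in X in _ = _ %[mod X]]hs => h.
exact: cg_modn h.
Qed.

Lemma eps_p (p : nat) : prime p -> cg (zv (eps p) p)%:~R 1 p%:R.
Proof.
move=> pr; have p0 : (0 < p)%N by apply: prime_gt0.
apply: cg_trans (zv_mkZ _ p0) _.
have hs : (p`_p)%N = p by apply: part_pnat_id; apply: pnat_id.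
have := chinese_modl (coprime_partC p p p) 1 0.
rewrite [in X in _ = _ %[mod X]]hs => h.
have h2 := cg_modn h.
exact: h2.
Qed.

Lemma AfZ_compat z : forall k l, (k.+1 %| l.+1)%N ->
  cg ((fun n => (zv z n)%:~R) l.+1) ((fun n => (zv z n)%:~R) k.+1) k.+1%:R.
Proof. by move=> k l H; apply: zv_cg. Qed.

Definition AfZ z : Af := mkAf (@AfZ_compat z).

Lemma A_AfZ z q : cg (A (AfZ z) q) (q * (zv z (dn q))%:~R) 1.
Proof. exact: cg_int (cg_scale q (av_mkAf (@AfZ_compat z) (dn_gt0 q))) (isZ_qdn q). Qed.

Lemma zhat_inhab : Zhat.
Proof. exact: eps 2. Qed.

Lemma core L xi a p y : is_subgroup L -> is_hom L xi ->
  (forall x, L x -> afmulq a x = zhat_to_af (xi x)) -> generates_Hom L xi ->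
  prime p -> L (p%:R * y) -> isZ (A a y) -> L y.
Proof.
move=> HL Hxi Ha Hgen pr Lw HAy; apply: NNPP => Ny.
have p0 : (0 < p)%N by apply: prime_gt0.
have pnz : p%:R != 0 :> rat by rewrite pnatr_eq0 -lt0n.
have ynz : y != 0 by apply/eqP => y0; apply: Ny; rewrite y0; exact: L0.
set w := p%:R * y.
have wnz : w != 0 by rewrite mulf_neq0.
have C : forall x, L x -> ~~ (p %| dn (w^-1 * x))%N.
  move=> x Lx; apply/negP => hd; apply: Ny.
  set z := w^-1 * x.
  have [t ht] : exists t, dn z = (t * p)%N by exists (dn z %/ p)%N; rewrite divnK.
  have cop : coprime `|numq z| p by apply: coprime_dvdr hd (coprime_num_den z).
  have [u [v Huv]] := Bezoutz (numq z) p%:Z.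
  have g1 : gcdz (numq z) p%:Z = 1 by rewrite /gcdz /=; apply/eqP.
  rewrite g1 in Huv.
  have tnz : t%:R != 0 :> rat.
    by apply/eqP => t0; move: (dn_gt0 z); rewrite ht; move: t0 => /eqP; rewrite pnatr_eq0 => /eqP ->.
  have zE : z * (t%:R * p%:R) = (numq z)%:~R by rewrite -natrM -ht q_dn.
  have ry : (numq z)%:~R * y = t%:R * x.
    rewrite -zE /z /w; field; by rewrite pnz ynz.
  have L1 : L ((numq z)%:~R * y) by rewrite ry; exact: L_muln.
  have -> : y = u%:~R * ((numq z)%:~R * y) + v%:~R * (p%:R * y).
    have -> : p%:R = (p%:Z)%:~R :> rat by [].
    by rewrite !mulrA -!intrM -mulrDl -intrD Huv mul1r.
  by apply: L_add => //; apply: L_mulz.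
pose e := eps p.
pose b := AfMulq (AfZ e) w^-1.
have HbA : forall q, cg (A b q) ((w^-1 * q) * (zv e (dn (w^-1 * q)))%:~R) 1.
  move=> q; exact: cg_trans (A_AfMulq _ _ _) (A_AfZ _ _).
have HbL : forall x, L x -> isZ (A b x).
  move=> x Lx; apply: cg_isZ (HbA x) _.
  have h := eps_p' pr (dn_gt0 _) (C x Lx).
  have := cg_int (cg_scale (w^-1 * x) h) (isZ_qdn _); rewrite mulr0 => h2.
  by apply/isZ_cg.
have [eta Heta] : exists eta : rat -> Zhat, forall x, L x -> afmulq b x = zhat_to_af (eta x).
  have H1 : forall x, exists z : Zhat, L x -> afmulq b x = zhat_to_af z.
    move=> x; case: (classic (L x)) => Lx.
      by have [z Hz] := (in_Zhat_iff b x).2 (HbL x Lx); exists z.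
    by exists zhat_inhab.
  exists (fun x => proj1_sig (constructive_indefinite_description _ (H1 x))).
  move=> x; exact: (proj2_sig (constructive_indefinite_description _ (H1 x))).
have Hhom : is_hom L eta.
  move=> x1 x2 L1 L2; apply: functional_extensionality => k; rewrite /zadd.
  set n := k.+1; have n0 : (0 < n)%N by [].
  change (zval (eta (x1 + x2)) k) with (zv (eta (x1 + x2)) n).
  change (zval (eta x1) k) with (zv (eta x1) n).
  change (zval (eta x2) k) with (zv (eta x2) n).
  apply: esym; apply: modz_uniq => //; first exact: zv_range.
  rewrite intrD.
  apply: cg_trans (cgD (xi_cg (Heta _ L1) n0) (xi_cg (Heta _ L2) n0)) _.
  apply: cg_sym; apply: cg_trans (xi_cg (Heta _ (L_add HL L1 L2)) n0) _.
  rewrite -mulrDr mulrDl; have := cg_scale n%:R (A_add b (x1 / n%:R) (x2 / n%:R)).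
  by rewrite mulr1.
have [c Hc] := Hgen eta Hhom.
have e1 := congr1 (fun f => f p.-1) (Hc w Lw); rewrite /= /zmul in e1.
change (zval (eta w) p.-1) with (zv (eta w) p) in e1.
change (zval c p.-1) with (zv c p) in e1.
change (zval (xi w) p.-1) with (zv (xi w) p) in e1.
rewrite prednK // in e1.
have wy : w / p%:R = y by rewrite mulrC /w mulKf.
have hx : cg (zv (xi w) p)%:~R 0 p%:R.
  apply: cg_trans (xi_cg (Ha w Lw) p0) _.
  rewrite wy.
  have [k Hk] := HAy; exists k; rewrite Hk subr0 mulrC //.
have e2 : zv (eta w) p = 0.
  rewrite e1; apply: modz_uniq => //; first by rewrite mulr0z lexx ltr0n.
  by rewrite intrM; move: (cgZ (zv c p) hx); rewrite mulr0.
have hy : cg (zv (eta w) p)%:~R 1 p%:R.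
  apply: cg_trans (xi_cg (Heta w Lw) p0) _.
  rewrite wy.
  have wE : w^-1 * y = p%:R^-1 by rewrite /w invfM -mulrA mulVf // mulr1.
  have h1 := HbA y; rewrite wE in h1.
  have h2 : cg (p%:R^-1 * (zv e (dn p%:R^-1))%:~R) (p%:R^-1) 1.
    have h3 := A_AfZ e (p%:R^-1).
    have h4 : cg (p%:R^-1 * av (AfZ e) p) (A (AfZ e) p%:R^-1) 1.
      by apply: A_cg => //; rewrite mulVf //; exact: isZ1.
    apply: cg_trans (cg_sym h3) _; apply: cg_trans (cg_sym h4) _.
    have h5 := cg_trans (av_mkAf (@AfZ_compat e) p0) (eps_p pr).
    by have := cg_scale (p%:R^-1) h5; rewrite mulr1 mulVf.
  have h7 := cg_trans h1 h2.
  by have := cg_scale p%:R h7; rewrite mulr1 mulfV.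
rewrite e2 in hy.
have := cg_range_eq _ _ hy.
have p1 : (1 < p)%N by apply: prime_gt1.
have r0 : (0 : rat) <= ((0:int)%:~R : rat) < (p%:R : rat) by rewrite mulr0z lexx ltr0n.
have r1 : (0 : rat) <= (1 : rat) < (p%:R : rat) by rewrite ler01 ltr1n.
by move=> /(_ r0 r1) /eqP; rewrite eq_sym oner_eq0.
Qed.

Lemma ker_of_gen L xi a : is_subgroup L -> (exists x, L x /\ x != 0) -> is_hom L xi ->
  (forall x, L x -> afmulq a x = zhat_to_af (xi x)) -> generates_Hom L xi ->
  forall q, L q <-> isZ (A a q).
Proof.
move=> HL Hne Hxi Ha Hgen q; split; first by move=> Lq; exact: hom_A_isZ (Ha q Lq).
have main : forall k, (0 < k)%N -> forall q, L (k%:R * q) -> isZ (A a q) -> L q.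
  elim/ltn_ind => k IH k0 q' Lk HA.
  case: (ltngtP k 1) => hk; first by move: k0 hk; case: k {IH Lk}.
  - set p := pdiv k.
    have pr : prime p by apply: pdiv_prime.
    have [k' hk'] : exists k', k = (k' * p)%N by exists (k %/ p)%N; rewrite divnK // pdiv_dvd.
    have p1 := prime_gt1 pr.
    have k'0 : (0 < k')%N by move: k0; rewrite hk' muln_gt0 => /andP[].
    have k'lt : (k' < k)%N by rewrite hk' -{1}(muln1 k') ltn_pmul2l.
    apply: (IH k' k'lt k'0) => //.
    apply: (core HL Hxi Ha Hgen pr).
      by rewrite mulrA -natrM mulnC -hk'.
    apply: cg_isZ (A_mulz a q' k'%:Z) _.
    exact: isZM (isZ_nat _) HA.
  - by move: Lk; rewrite hk mul1r.
move=> HA; have [x0 [Lx0 x0p]] := pos_elem HL Hne.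
have nx0 : (0 < numq x0) by rewrite numq_gt0.
apply: (main (dn q * `|numq x0|)%N) => //.
  by rewrite muln_gt0 dn_gt0 absz_gt0 gt_eqF.
have -> : (dn q * `|numq x0|)%:R * q = (numq q * Posz (dn x0))%:~R * x0.
  have u0E : (`|numq x0|%N)%:R = (numq x0)%:~R :> rat by rewrite natr_absz gtr0_norm.
  rewrite natrM u0E intrM -(q_dn x0) -(q_dn q).
  rewrite -[(Posz (dn x0))%:~R]/((dn x0)%:R : rat); ring.
exact: L_mulz.
Qed.

Unset Implicit Arguments.
Theorem lemma8p3 (L : rat -> Prop) (xi : rat -> Zhat) :
  is_subgroup L -> (exists x, L x /\ x != 0) -> is_hom L xi ->
  exists a : Af,
    ((forall x, L x -> afmulq a x = zhat_to_af (xi x)) /\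
     (forall b : Af, (forall x, L x -> afmulq b x = zhat_to_af (xi x)) -> b = a)) /\
    (generates_Hom L xi <-> (forall q : rat, L q <-> in_Zhat (afmulq a q))).
Proof.
move=> HL Hne Hxi.
have [a Ha] := hom_adele HL Hne Hxi.
exists a; split; [split|] => //.
  move=> b Hb; have [x0 [Lx0 x0p]] := pos_elem HL Hne.
  by apply: (afmulq_inj x0p); rewrite Ha // Hb.
split.
- move=> Hgen q; rewrite in_Zhat_iff; exact: ker_of_gen HL Hne Hxi Ha Hgen q.
- move=> K; apply: (gen_of_ker HL Hne Hxi Ha) => q; rewrite -in_Zhat_iff; exact: K.
Qed.
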